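(* Let $(P,e)$, $P\in\mathcal{T}_k$, be a friendly tree pattern, let $\sigma(P,e)=(\tau(P),C)$ be its associated mesh pattern, let $i$ be the position of the largest value $k$ in $\tau(P)$, and let $\sigma^-(P,e)=(\tau(P),C\setminus\{(i-1,k)\})$. Then the mesh pattern $\sigma^-(P,e)$ is tame.
   Context: Binary trees: $\mathcal{T}_k$ is the set of binary trees on $k$ vertices labeled $1,\dots,k$ by the search tree property (left-subtree vertices of $i$ smaller, right-subtree vertices larger). $c_L(i),c_R(i),p(i)$: left child, right child, parent ($\varepsilon$ if nonexistent); $r(P)$ the root; $P(i)$ the subtree rooted at $i$; $L(i),R(i)$ the subtrees rooted at $c_L(i),c_R(i)$. $B_R(i)=\{i,c_R(i),c_R^2(i),\dots\}$ is the vertex set of the right branch starting at $i$; $B_R^-(i)$ is $B_R(i)$ minus its last vertex. A tree pattern is $(P,e)$ with $e\colon[k]\setminus\{r(P)\}\to\{0,1\}$. The preorder permutation is $\tau(\varepsilon)=$ empty, $\tau(P)=(r(P),\tau(L(P)),\tau(R(P)))$. $(P,e)$ is friendly if: (i) $p(k)\neq\varepsilon$ and $c_L(k)\neq\varepsilon$; (ii) $e(j)=0$ for all $j\in B_R^-(r(P))\setminus\{r(P)\}$; (iii) if $e(k)=1$ then $e(c_L(k))=0$. Mesh patterns: a mesh pattern is $(\tau,C)$, $\tau\in S_k$, $C\subseteq\{0,\dots,k\}^2$. With $G(\pi)=\{(j,\pi(j))\}$, $\pi\in S_n$ contains $(\tau,C)$ if there are indices $\nu_1<\dots<\nu_k$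 with $\pi(\nu_1),\dots,\pi(\nu_k)$ order-isomorphic to $\tau$ and, for $\lambda_1<\dots<\lambda_k$ these values sorted and $\nu_0=\lambda_0=0$, $\nu_{k+1}=\lambda_{k+1}=n+1$, $G(\pi)\cap((\nu_a,\nu_{a+1})\times(\lambda_b,\lambda_{b+1}))=\emptyset$ for all $(a,b)\in C$. $S_n(\sigma)$ denotes the permutations of $[n]$ avoiding $\sigma$. $\sigma(P,e)$: with $\rho=\tau(P)^{-1}$, $C_j=\{(\rho(j)-1,m):m\in B_R^-(j)\}$ for $j\in[k]$, and for non-root $j$, $C_j'=\emptyset$ if $e(j)=0$, $C_j'=\{(\rho(j)-1,\min P(j)-1),(\rho(j)-1,\max P(j))\}$ if $e(j)=1$; $\sigma(P,e)=(\tau(P),\bigcup_j C_j\cup\bigcup_j C_j')$. Tameness: for $\pi\in S_{n-1}$ and $1\le j\le n$, $c_j(\pi)\in S_n$ inserts the value $n$ at position $j$; for $\pi\in S_n$, $p(\pi)\in S_{n-1}$ removes the value $n$. $L_n\subseteq S_n$ is a zigzag language if either $n=0$ and $L_0=\{\varepsilon\}$, or $n\ge1$, $L_{n-1}:=\{p(\pi):\pi\in L_n\}$ is a zigzag language, and $c_1(\pi),c_n(\pi)\in L_n$ for all $\pi\in L_{n-1}$. A sequence $L_0,L_1,\dots$ is hereditary if $L_{n-1}=p(L_n)$ for all $n\ge1$. A pattern $\sigma$ is tame if $S_n(\sigma)$, $n\ge0$, is a hereditary sequence of zigzag languages. *)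

(* Defs.v *)
From mathcomp Require Import all_boot.
Set Implicit Arguments. Unset Strict Implicit. Unset Printing Implicit Defensive.

Inductive btree := BLeaf | BNode of btree & nat & btree.

Fixpoint labels (t : btree) : seq nat :=
  if t is BNode l v r then labels l ++ v :: labels r else [::].

Fixpoint search_tree (t : btree) : bool :=
  if t is BNode l v r then
    [&& all (fun x => x < v) (labels l), all (fun x => v < x) (labels r),
        search_tree l & search_tree r]
  else true.

Definition in_T (k : nat) (t : btree) : bool :=
  search_tree t && perm_eq (labels t) (iota 1 k).

(* root label; None plays the role of epsilon *)
Definition root (t : btree) : option nat :=
  if t is BNode _ v _ then Some v else None.

(* P(j): the subtree rooted at vertex j (BLeaf if j is not a vertex) *)
Fixpoint subtree (t : btree) (j : nat) : btree :=
  if t is BNode l v r then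
    if v == j then t
    else if subtree l j is BNode _ _ _ as s then s else subtree r j
  else BLeaf.

Definition cL (t : btree) (j : nat) : option nat :=
  if subtree t j is BNode l _ _ then root l else None.
Definition cR (t : btree) (j : nat) : option nat :=
  if subtree t j is BNode _ _ r then root r else None.

Fixpoint parent (t : btree) (j : nat) : option nat :=
  if t is BNode l v r then
    if (root l == Some j) || (root r == Some j) then Some v
    else if parent l j is Some x then Some x else parent r j
  else None.

Fixpoint rspine (s : btree) : seq nat :=
  if s is BNode _ v r then v :: rspine r else [::].
Definition BR (t : btree) (j : nat) : seq nat := rspine (subtree t j).
Definition BRm (t : btree) (j : nat) : seq nat :=
  take (size (BR t j)).-1 (BR t j).

Definition minl (s : seq nat) : nat := foldr minn (head 0 s) s.
Definition maxl (s : seq nat) : nat := foldr maxn 0 s.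

Fixpoint preorder (t : btree) : seq nat :=
  if t is BNode l v r then v :: preorder l ++ preorder r else [::].

(* e : [k] \ {r(P)} -> {0,1}, encoded as nat -> bool (true = 1);
   only its values on non-root vertices are ever used. *)
Definition friendly (k : nat) (t : btree) (e : nat -> bool) : Prop :=
  [/\ parent t k <> None /\ cL t k <> None,
      (forall j, j \in BRm t (odflt 0 (root t)) -> Some j <> root t -> e j = false)
    & (e k = true -> forall c, cL t k = Some c -> e c = false)].

(* (tau, C): tau in one-line notation (values 1..k), C a list of boxes *)
Definition mesh := (seq nat * seq (nat * nat))%type.

(* sigma(P,e).  rho(j) - 1 = index j tau (0-based position of j in tau). *)
Definition sigmaP (k : nat) (t : btree) (e : nat -> bool) : mesh :=
  let tau := preorder t in
  let pos j := index j tau in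
  let Cj j := [seq (pos j, m) | m <- BRm t j] in
  let Cj' j := if (Some j != root t) && e j then
                 [:: (pos j, minl (labels (subtree t j)) - 1);
                     (pos j, maxl (labels (subtree t j)))]
               else [::] in
  (tau, flatten [seq Cj j ++ Cj' j | j <- iota 1 k]).

Definition sigma_minus (k : nat) (t : btree) (e : nat -> bool) : mesh :=
  let (tau, C) := sigmaP k t e in
  (tau, [seq x <- C | x != (index k tau, k)]).

Definition is_perm (n : nat) (s : seq nat) : bool := perm_eq s (iota 1 n).

Definition contains (pi : seq nat) (sg : mesh) : Prop :=
  let (tau, C) := sg in
  let n := size pi in
  let k := size tau in
  let val j := nth 0 pi j.-1 in
  exists nu : seq nat,
    [/\ size nu = k, sorted ltn nu, all (fun x => 0 < x <= n) nu,
        (forall a b, a < k -> b < k ->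
           (val (nth 0 nu a) < val (nth 0 nu b)) = (nth 0 tau a < nth 0 tau b))
      & let nub := 0 :: rcons nu n.+1 in
        let lam := 0 :: rcons (sort leq [seq val x | x <- nu]) n.+1 in
        forall ab, ab \in C -> forall j, 0 < j <= n ->
          ~ (nth 0 nub ab.1 < j < nth 0 nub ab.1.+1 /\
             nth 0 lam ab.2 < val j < nth 0 lam ab.2.+1)].

Definition Av (sg : mesh) (n : nat) (pi : seq nat) : Prop :=
  is_perm n pi /\ ~ contains pi sg.

(* c_j(pi): insert value n at position j (1-based); p(pi): remove value n *)
Definition cins (n j : nat) (pi : seq nat) : seq nat :=
  take j.-1 pi ++ n :: drop j.-1 pi.
Definition pdel (n : nat) (pi : seq nat) : seq nat := [seq x <- pi | x != n].

Definition pimg (n : nat) (L : seq nat -> Prop) : seq nat -> Prop :=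
  fun s => exists pi, L pi /\ s = pdel n pi.

Fixpoint zigzag (n : nat) (L : seq nat -> Prop) : Prop :=
  match n with
  | 0 => forall s, L s <-> s = [::]
  | m.+1 => (forall s, L s -> is_perm m.+1 s) /\
            zigzag m (pimg m.+1 L) /\
            (forall pi, pimg m.+1 L pi -> L (cins m.+1 1 pi) /\ L (cins m.+1 m.+1 pi))
  end.

Definition hereditary (L : nat -> seq nat -> Prop) : Prop :=
  forall n, forall s, L n s <-> pimg n.+1 (L n.+1) s.

Definition tame (sg : mesh) : Prop :=
  (forall n, zigzag n (Av sg n)) /\ hereditary (Av sg).

(* Main.v *)
Require Import Defs.
From mathcomp Require Import all_boot.
From mathcomp Require Import zify.
Set Implicit Arguments. Unset Strict Implicit. Unset Printing Implicit Defensive.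

Definition vl (pi : seq nat) (j : nat) := nth 0 pi j.-1.

Definition occ (pi tau : seq nat) (C : seq (nat * nat)) (nu : seq nat) : Prop :=
  [/\ size nu = size tau, sorted ltn nu, all (fun x => 0 < x <= size pi) nu,
   (forall a b, a < size tau -> b < size tau ->
      (vl pi (nth 0 nu a) < vl pi (nth 0 nu b)) = (nth 0 tau a < nth 0 tau b))
 & forall ab, ab \in C -> forall j, 0 < j <= size pi ->
     ~ (nth 0 (0 :: rcons nu (size pi).+1) ab.1 < j <
          nth 0 (0 :: rcons nu (size pi).+1) ab.1.+1 /\
        nth 0 (0 :: rcons (sort leq (map (vl pi) nu)) (size pi).+1) ab.2 < vl pi j <
          nth 0 (0 :: rcons (sort leq (map (vl pi) nu)) (size pi).+1) ab.2.+1)].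

Lemma containsE pi tau C : contains pi (tau, C) <-> exists nu, occ pi tau C nu.
Proof. by []. Qed.

Ltac nlia := intros; repeat match goal with H : is_true (_ && _) |- _ => case/andP: H => ? ? end; lia.

Definition fsh (a j : nat) := if j <= a then j else j.+1.
Definition hsh (a j : nat) := if j <= a then j else j.-1.

Lemma fsh_mono a x y : (fsh a x < fsh a y) = (x < y).
Proof. rewrite /fsh; case: ifP; case: ifP; lia. Qed.

Lemma fsh0 a : fsh a 0 = 0. Proof. by []. Qed.

Lemma nth_map0 (f : nat -> nat) s i : f 0 = 0 -> nth 0 (map f s) i = f (nth 0 s i).
Proof.
move=> f0; case: (ltnP i (size s)) => hi; first by rewrite (nth_map 0).
by rewrite !nth_default ?size_map.
Qed.

Lemma nth_fsh (A B : seq nat) x j : 0 < j ->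
  nth 0 (A ++ x :: B) (fsh (size A) j).-1 = nth 0 (A ++ B) j.-1.
Proof.
move=> j0; rewrite /fsh; case: ifP => hj.
  by rewrite !nth_cat; have -> : j.-1 < size A by lia.
rewrite !nth_cat /=.
have -> : j < size A = false by lia.
have -> : j.-1 < size A = false by lia.
have -> : j - size A = (j.-1 - size A).+1 by lia.
by [].
Qed.

Lemma sorted_fsh a nu : sorted ltn (map (fsh a) nu) = sorted ltn nu.
Proof.
rewrite sorted_map; apply: eq_sorted => x y /=; exact: fsh_mono.
Qed.

Lemma ins_occ A B n tau C nu :
  size (A ++ B) = n -> all (fun x => x <= n) (A ++ B) ->
  (forall ab, ab \in C -> ab.2 != size tau) ->
  occ (A ++ B) tau C nu -> occ (A ++ n.+1 :: B) tau C (map (fsh (size A)) nu).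
Proof.
move=> sz hall hC [s1 s2 s3 s4 s5].
set f := fsh (size A).
have szA : size A <= n by rewrite -sz size_cat; lia.
have sz' : size (A ++ n.+1 :: B) = n.+1 by rewrite size_cat /= -sz size_cat addnS.
have hval : forall j, 0 < j -> vl (A ++ n.+1 :: B) (f j) = vl (A ++ B) j.
  by move=> j j0; rewrite /vl nth_fsh.
have valle : forall j, 0 < j <= n -> vl (A ++ B) j <= n.
  move=> j hj; apply: (allP hall); apply: mem_nth; rewrite sz; case: j hj => //= j; lia.
have nuin : forall x, x \in nu -> 0 < x <= n.
  by move=> x hx; have := allP s3 x hx; rewrite sz.
have emap : map (vl (A ++ n.+1 :: B)) (map f nu) = map (vl (A ++ B)) nu.
  rewrite -map_comp; apply/eq_in_map => x /nuin hx /=; apply: hval; lia.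
split.
- by rewrite size_map.
- by rewrite sorted_fsh.
- rewrite all_map; apply/allP => x /nuin /= hx; rewrite sz' /f /fsh; case: ifP; lia.
- move=> a b ha hb; rewrite !(nth_map 0) ?s1 // !hval; first exact: s4.
  + have hb' : b < size nu by rewrite s1.
    have := nuin _ (mem_nth 0 hb'); by case/andP.
  + have ha' : a < size nu by rewrite s1.
    have := nuin _ (mem_nth 0 ha'); by case/andP.
rewrite sz' emap => ab hab j' hj' [hcol hrow].
set S := sort leq (map (vl (A ++ B)) nu).
have Sle : forall x, x \in S -> x <= n.
  move=> x; rewrite mem_sort => /mapP [y /nuin hy ->]; exact: valle.
have szS : size S = size tau by rewrite size_sort size_map.
move: hrow s5; rewrite -/S => hrow s5; clearbody S; move: hrow; case: (eqVneq j' (size A).+1) => hj.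
  have -> : vl (A ++ n.+1 :: B) j' = n.+1 by rewrite hj /vl /= nth_cat ltnn subnn.
  rewrite /= nth_rcons szS.
  case: ifP => hb.
    have hb' : ab.2 < size S by rewrite szS.
    have hle : nth 0 S ab.2 <= n := Sle _ (mem_nth 0 hb'). case/andP=> _ h; have := leq_trans h hle; lia.
  by rewrite (negPf (hC _ hab)); lia.
pose j := hsh (size A) j'.
have ej : f j = j' by rewrite /f /j /fsh /hsh; case: ifP; case: ifP; lia.
have hj0 : 0 < j <= n by rewrite /j /hsh; case: ifP; lia.
move=> hrow; move: hcol hrow; rewrite -ej hval; last lia.
have -> : 0 :: rcons (map f nu) n.+2 = map f (0 :: rcons nu n.+1).
  by rewrite /= map_rcons /f /fsh; have -> : n.+1 <= size A = false by lia.
rewrite !nth_map0 // !fsh_mono => hcol hrow.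
pose g x := if x == n.+1 then n.+2 else x.
move: hrow; have -> : 0 :: rcons S n.+2 = map g (0 :: rcons S n.+1).
  rewrite /= map_rcons /g eqxx; congr (_ :: rcons _ _); rewrite map_id_in //.
  by move=> x /Sle hx; have -> : (x == n.+1) = false by lia.
rewrite !nth_map0 // => hrow.
apply: (s5 ab hab j); first by rewrite sz.
split; first by rewrite sz.
have := valle j hj0; move: hrow; rewrite /g sz.
case: ifP => /eqP h1; case: ifP => /eqP h2; nlia.
Qed.

Lemma del_occ A B n tau C nu :
  size (A ++ B) = n -> all (fun x => x <= n) (A ++ B) ->
  occ (A ++ n.+1 :: B) tau C (map (fsh (size A)) nu) -> occ (A ++ B) tau C nu.
Proof.
move=> sz hall [s1 s2 s3 s4 s5].
set f := fsh (size A).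
have szA : size A <= n by rewrite -sz size_cat; lia.
have sz' : size (A ++ n.+1 :: B) = n.+1 by rewrite size_cat /= -sz size_cat addnS.
have hval : forall j, 0 < j -> vl (A ++ n.+1 :: B) (f j) = vl (A ++ B) j.
  by move=> j j0; rewrite /vl nth_fsh.
have valle : forall j, 0 < j <= n -> vl (A ++ B) j <= n.
  move=> j hj; apply: (allP hall); apply: mem_nth; rewrite sz; case: j hj => //= j; lia.
have nuin : forall x, x \in nu -> 0 < x <= n.
  move=> x hx; have := allP s3 (f x) (map_f f hx); rewrite sz' /f /fsh.
  case: (leqP x (size A)) => ?; nlia.
have emap : map (vl (A ++ n.+1 :: B)) (map f nu) = map (vl (A ++ B)) nu.
  rewrite -map_comp; apply/eq_in_map => x /nuin hx /=; apply: hval; nlia.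
move: s1 s2 s4 s5; rewrite size_map sorted_fsh sz' emap => s1 s2 s4 s5.
split => //.
- by apply/allP => x /nuin; rewrite sz.
- move=> a b ha hb; rewrite -s4 // !(nth_map 0) ?s1 // !hval //.
  + have hb' : b < size nu by rewrite s1.
    have := nuin _ (mem_nth 0 hb'); by case/andP.
  + have ha' : a < size nu by rewrite s1.
    have := nuin _ (mem_nth 0 ha'); by case/andP.
rewrite sz => ab hab j hj [hcol hrow].
set S := sort leq (map (vl (A ++ B)) nu).
have Sle : forall x, x \in S -> x <= n.
  move=> x; rewrite mem_sort => /mapP [y /nuin hy ->]; exact: valle.
move: hrow s5; rewrite -/S => hrow s5; clearbody S.
apply: (s5 ab hab (f j)); first by rewrite /f /fsh; case: (leqP j (size A)) => ?; nlia.
have -> : 0 :: rcons (map f nu) n.+2 = map f (0 :: rcons nu n.+1).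
  by rewrite /= map_rcons /f /fsh; have -> : n.+1 <= size A = false by lia.
rewrite !nth_map0 // !fsh_mono hval; last nlia.
split => //.
pose g x := if x == n.+1 then n.+2 else x.
have -> : 0 :: rcons S n.+2 = map g (0 :: rcons S n.+1).
  rewrite /= map_rcons /g eqxx; congr (_ :: rcons _ _); rewrite map_id_in //.
  by move=> x /Sle hx; have -> : (x == n.+1) = false by lia.
rewrite !nth_map0 //.
have := valle j hj; move: hrow; rewrite /g.
case: ifP => /eqP h1; case: ifP => /eqP h2; nlia.
Qed.


Lemma perm_insE n A B : is_perm n.+1 (A ++ n.+1 :: B) = is_perm n (A ++ B).
Proof.
rewrite /is_perm; have -> : iota 1 n.+1 = iota 1 n ++ [:: n.+1] by rewrite -(addn1 n) iotaD add1n addn1.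
have -> : A ++ n.+1 :: B = A ++ [:: n.+1] ++ B by [].
rewrite perm_catCA /= perm_sym perm_catC /= perm_cons perm_sym.
by [].
Qed.

Lemma is_perm_le n s : is_perm n s -> all (fun x => x <= n) s /\ size s = n.
Proof.
move=> h; split; last by rewrite (perm_size h) size_iota.
apply/allP => x; rewrite (perm_mem h) mem_iota; nlia.
Qed.

Lemma perm_split n pi : is_perm n.+1 pi ->
  exists A B, pi = A ++ n.+1 :: B /\ is_perm n (A ++ B).
Proof.
move=> h; have hx : n.+1 \in pi by rewrite (perm_mem h) mem_iota; lia.
move: h; case/splitPr: hx => A B h; exists A, B; split => //.
by rewrite -perm_insE.
Qed.

Lemma pdel_eq n A B : is_perm n (A ++ B) -> pdel n.+1 (A ++ n.+1 :: B) = A ++ B.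
Proof.
move=> /is_perm_le [hall _]; rewrite /pdel filter_cat /= eqxx -filter_cat.
apply/all_filterP; apply/allP => x /(allP hall) hx; apply/eqP; lia.
Qed.

Lemma occ_top A B n tau C nu a :
  size (A ++ B) = n -> all (fun x => x <= n) (A ++ B) ->
  perm_eq tau (iota 1 (size tau)) ->
  occ (A ++ n.+1 :: B) tau C nu -> a < size tau -> nth 0 nu a = (size A).+1 ->
  nth 0 tau a = size tau.
Proof.
move=> sz hall ht [s1 s2 s3 s4 s5] ha hna.
have szA : size A <= n by rewrite -sz size_cat; lia.
have sz' : size (A ++ n.+1 :: B) = n.+1 by rewrite size_cat /= -sz size_cat addnS.
have hu : uniq nu by apply: (sorted_uniq ltn_trans) => // x; rewrite ltnn.
have vtop : vl (A ++ n.+1 :: B) (size A).+1 = n.+1 by rewrite /vl /= nth_cat ltnn subnn.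
have vlow : forall j, 0 < j <= n.+1 -> j != (size A).+1 -> vl (A ++ n.+1 :: B) j <= n.
  move=> j hj hne.
  have -> : j = fsh (size A) (hsh (size A) j) by rewrite /fsh /hsh; case: (leqP j (size A)) => ?; case: ifP => ?; nlia.
  rewrite /vl nth_fsh; last by rewrite /hsh; case: (leqP j (size A)) => ?; nlia.
  apply: (allP hall); apply: mem_nth; rewrite sz /hsh; case: (leqP j (size A)) => ?; nlia.
have less : forall b, b < size tau -> b != a -> nth 0 tau b < nth 0 tau a.
  move=> b hb hba; rewrite -s4 // hna vtop ltnS; apply: vlow.
    have hb' : b < size nu by rewrite s1.
    by have := allP s3 _ (mem_nth 0 hb'); rewrite sz'.
  rewrite -hna nth_uniq ?s1 //.
have kin : size tau \in tau by rewrite (perm_mem ht) mem_iota; lia.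
have tle : forall x, x \in tau -> x <= size tau.
  by move=> x; rewrite (perm_mem ht) mem_iota; nlia.
case: (eqVneq (index (size tau) tau) a) => hi.
  by rewrite -hi nth_index.
have hk : index (size tau) tau < size tau by rewrite index_mem.
have h1 : size tau < nth 0 tau a by have := less _ hk hi; rewrite nth_index.
have h2 : nth 0 tau a <= size tau := tle _ (mem_nth 0 ha).
lia.
Qed.

Lemma occ_avoid A B n tau C nu :
  size (A ++ B) = n -> all (fun x => x <= n) (A ++ B) ->
  occ (A ++ n.+1 :: B) tau C nu -> (size A).+1 \notin nu -> contains (A ++ B) (tau, C).
Proof.
move=> sz hall ho hn; exists (map (hsh (size A)) nu); apply: del_occ sz hall _.
rewrite -map_comp map_id_in // => x hx /=.
have : x != (size A).+1 by apply: contraNneq hn => <-.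
rewrite /fsh /hsh; case: (leqP x (size A)) => ?; case: ifP => ?; nlia.
Qed.


Lemma zigzag_ext n (L L' : seq nat -> Prop) :
  (forall s, L s <-> L' s) -> zigzag n L -> zigzag n L'.
Proof.
elim: n L L' => [|n IH] L L' e /=.
  by move=> h s; rewrite -e.
move=> [h1 [h2 h3]]; split; first by move=> s /e /h1.
have ep : forall s, pimg n.+1 L s <-> pimg n.+1 L' s.
  by move=> s; split=> -[pi [hp ->]]; exists pi; split=> //; apply/e.
split; first exact: IH ep h2.
by move=> pi /ep /h3 [] /e ? /e.
Qed.

Section Gen.
Variables (tau : seq nat) (C : seq (nat * nat)).
Hypothesis ht : perm_eq tau (iota 1 (size tau)).
Hypothesis hk : 0 < size tau.
Hypothesis hC : forall ab, ab \in C -> ab.2 != size tau.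
Hypothesis h0 : nth 0 tau 0 != size tau.
Hypothesis hl : nth 0 tau (size tau).-1 != size tau.

Lemma ins_first n pi : is_perm n pi -> contains (n.+1 :: pi) (tau, C) -> contains pi (tau, C).
Proof.
move=> hp [nu ho]; have [hall sz] := is_perm_le hp.
have ho' : occ ([::] ++ n.+1 :: pi) tau C nu by [].
case: (boolP (1 \in nu)) => h1; last exact: (occ_avoid (A := [::]) sz hall ho' h1).
exfalso; case: ho => s1 s2 s3 s4 s5.
have ha : index 1 nu < size tau by rewrite -s1 index_mem.
have hna : nth 0 nu (index 1 nu) = (size ([::] : seq nat)).+1 by rewrite nth_index.
have := occ_top (A := [::]) sz hall ht ho' ha hna.
case: (posnP (index 1 nu)) => [->|hpos]; first by move=> e; move: h0; rewrite e eqxx.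
have hk' : 0 < size nu by rewrite s1.
have hlt : nth 0 nu 0 < nth 0 nu (index 1 nu).
  by apply: (sorted_ltn_nth ltn_trans) => //; rewrite inE ?s1.
have : 0 < nth 0 nu 0 by have := allP s3 _ (mem_nth 0 hk'); case/andP.
move: hlt; rewrite nth_index //; lia.
Qed.

Lemma ins_last n pi : is_perm n pi -> contains (pi ++ [:: n.+1]) (tau, C) -> contains pi (tau, C).
Proof.
move=> hp [nu ho]; have [hall sz] := is_perm_le hp.
have szp : size pi = n by [].
rewrite -(cats0 pi) in hall sz *.
case: (boolP (n.+1 \in nu)) => h1; last first.
  by apply: (occ_avoid sz hall ho); rewrite szp.
exfalso; have ho2 := ho; case: ho2 => s1 s2 s3 s4 s5.
have ha : index n.+1 nu < size tau by rewrite -s1 index_mem.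
have hna : nth 0 nu (index n.+1 nu) = (size pi).+1.
  by rewrite nth_index // szp.
have := occ_top sz hall ht ho ha hna.
case: (eqVneq (index n.+1 nu) (size tau).-1) => [->|hne]; first by move=> e; move: hl; rewrite e eqxx.
move=> _.
have hb : (index n.+1 nu).+1 < size nu by rewrite s1; lia.
have hlt : nth 0 nu (index n.+1 nu) < nth 0 nu (index n.+1 nu).+1.
  by apply: (sorted_ltn_nth ltn_trans) => //; rewrite inE ?s1 //; lia.
have : nth 0 nu (index n.+1 nu).+1 <= size (pi ++ [:: n.+1]).
  by have := allP s3 _ (mem_nth 0 hb); case/andP.
move: hlt; rewrite nth_index // size_cat /= addn1.
lia.
Qed.

Lemma Av_first n s : Av (tau, C) n s -> Av (tau, C) n.+1 (n.+1 :: s).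
Proof.
move=> [hp hn]; split; first by move: (perm_insE n [::] s) => /= ->.
by move=> hc; apply: hn; exact: ins_first hp hc.
Qed.

Lemma Av_last n s : Av (tau, C) n s -> Av (tau, C) n.+1 (s ++ [:: n.+1]).
Proof.
move=> [hp hn]; split; first by rewrite perm_insE cats0.
by move=> hc; apply: hn; exact: ins_last hp hc.
Qed.

Lemma F1 n s : Av (tau, C) n s <-> pimg n.+1 (Av (tau, C) n.+1) s.
Proof.
split.
  move=> hs; exists (n.+1 :: s); split; first exact: Av_first.
  by symmetry; exact: (pdel_eq (A := [::]) hs.1).
move=> [pi [[hp hn] ->]]; case: (perm_split hp) => A [B [e hp']]; subst pi.
rewrite pdel_eq //; split => // -[nu ho]; apply: hn.
have [hall sz] := is_perm_le hp'.
by exists (map (fsh (size A)) nu); apply: ins_occ.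
Qed.

Lemma zig n : zigzag n (Av (tau, C) n).
Proof.
elim: n => [|m IH].
  move=> s; split.
    by move=> [hp _]; apply: size0nil; rewrite (perm_size hp).
  move=> ->; split; first by [].
  case=> nu [s1 _ s3 _ _]; case: nu s1 s3 => [|x nu]; first by move=> e; move: hk; rewrite -e.
  by move=> _ /= /andP [] /andP [] ? ? _; lia.
split; first by move=> s [].
split.
  by apply: zigzag_ext IH => s; exact: F1.
move=> pi /F1 hpi; split.
  by rewrite /cins take0 drop0; exact: Av_first.
have [_ sz] := is_perm_le hpi.1.
rewrite /cins /=.
have -> : take m pi = pi by rewrite -sz take_size.
have -> : drop m pi = [::] by rewrite -sz drop_size.
exact: Av_last.
Qed.

Lemma tame_gen : tame (tau, C).
Proof. by split; [exact: zig | move=> n s; exact: F1]. Qed.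
End Gen.


Lemma perm_pre t : perm_eq (preorder t) (labels t).
Proof.
elim: t => [|l IHl v r IHr] //=.
rewrite -[labels l ++ v :: labels r]/(labels l ++ [:: v] ++ labels r).
rewrite perm_sym perm_catCA /= perm_cons perm_sym; exact: perm_cat.
Qed.

Lemma labels_sub t j x : x \in labels (subtree t j) -> x \in labels t.
Proof.
elim: t => [|l IHl v r IHr] //=.
case: eqP => // _; case E: (subtree l j) => [|a b c].
  by move=> /IHr h; rewrite mem_cat inE h !orbT.
by rewrite -E => /IHl h; rewrite mem_cat h.
Qed.

Lemma search_sub t j : search_tree t -> search_tree (subtree t j).
Proof.
elim: t => [|l IHl v r IHr] //= /and4P [h1 h2 h3 h4].
case: eqP => _; first by rewrite /= h1 h2 h3 h4.
case E: (subtree l j) => [|a b c]; first exact: IHr.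
by rewrite -E; exact: IHl.
Qed.

Lemma subtree_root t j a b c : subtree t j = BNode a b c -> b = j.
Proof.
elim: t => [|l IHl v r IHr] //=.
case: eqP => [-> [] //|_].
case E: (subtree l j) => [|a' b' c']; first exact: IHr.
by rewrite -E; exact: IHl.
Qed.

Lemma subtree_mem t j a b c : subtree t j = BNode a b c -> j \in labels t.
Proof.
move=> h; apply: (labels_sub (j := j)); rewrite h /= (subtree_root h).
by rewrite mem_cat inE eqxx orbT.
Qed.

Lemma mem_rspine t x : x \in rspine t -> x \in labels t.
Proof.
elim: t => [|l IHl v r IHr] //=; rewrite inE mem_cat inE.
by case/orP => [->|/IHr ->]; rewrite ?orbT.
Qed.

Lemma path_rspine t x : search_tree t -> all (fun y => x < y) (labels t) -> path ltn x (rspine t).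
Proof.
elim: t x => [|l IHl v r IHr] x //= /and4P [h1 h2 h3 h4].
rewrite all_cat /= => /and3P [_ -> _] /=; exact: IHr.
Qed.

Lemma sorted_rspine t : search_tree t -> sorted ltn (rspine t).
Proof.
case: t => [|l v r] //= /and4P [h1 h2 h3 h4]; exact: path_rspine.
Qed.

Lemma take_last_lt s x : sorted ltn s -> x \in take (size s).-1 s -> exists2 y, y \in s & x < y.
Proof.
elim: s => [|a s IH] // hs.
case: s hs IH => [|b s] // hs IH.
have hab : a < b by case/andP: hs.
have hs' : sorted ltn (b :: s) by case/andP: hs.
have -> : take (size [:: a, b & s]).-1 [:: a, b & s] = a :: take (size (b :: s)).-1 (b :: s) by [].
rewrite in_cons => /orP [/eqP ->|hx].
  by exists b => //; rewrite !in_cons eqxx orbT.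
have [y hy hxy] := IH hs' hx; exists y => //; by rewrite in_cons hy orbT.
Qed.

Lemma mem_take_last (s : seq nat) x d : x \in s -> x != last d s -> x \in take (size s).-1 s.
Proof.
case: s => [|a s] //= hx hne.
move: hx; rewrite lastI mem_rcons inE (negPf hne) /= => hx.
by rewrite -cats1 take_size_cat // size_belast.
Qed.

Lemma last_rspine t k d : search_tree t -> all (fun x => x <= k) (labels t) -> k \in labels t ->
  last d (rspine t) = k.
Proof.
elim: t d => [|l IHl v r IHr] d //= /and4P [h1 h2 h3 h4].
rewrite all_cat /= => /and3P [hl hv hr].
rewrite mem_cat inE => hk.
have kl : k \notin labels l.
  apply/negP => /(allP h1) hlt; lia.
rewrite (negPf kl) /= in hk.
case/orP: hk => [/eqP ek|hk].
  subst v; case: r IHr h2 h3 h4 hr => [|rl rv rr] //= _ h2 _ _ hr.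
  move: h2; rewrite all_cat /= => /and3P [_ hrv _].
  have : rv <= k by move/allP: hr => /(_ rv); rewrite mem_cat inE eqxx orbT => /(_ isT).
  lia.
by apply: IHr.
Qed.

Lemma in_rspine t j k : search_tree t -> all (fun x => x <= k) (labels t) ->
  k \in labels (subtree t j) -> j \in rspine t.
Proof.
elim: t => [|l IHl v r IHr] //= /and4P [h1 h2 h3 h4].
rewrite all_cat /= => /and3P [hl hv hr].
case: eqP => [->|_]; first by rewrite inE eqxx.
case E: (subtree l j) => [|a b c].
  by move=> hk; rewrite inE (IHr h4 hr hk) orbT.
rewrite -E => /labels_sub hk; have := allP h1 _ hk; lia.
Qed.

Lemma foldr_min x s : foldr minn x s <= x.
Proof. by elim: s => //= a s IH; rewrite geq_min IH orbT. Qed.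

Lemma maxl_mem s k : 0 < k -> maxl s = k -> k \in s.
Proof.
elim: s => [|a s IH] /= hk; first lia.
rewrite /maxn inE; case: ifP => _ e.
  by rewrite (IH hk e) orbT.
by rewrite e eqxx.
Qed.

Lemma root_mem t x : Defs.root t = Some x -> x \in labels t.
Proof. by case: t => //= l v r [->]; rewrite mem_cat inE eqxx orbT. Qed.

Lemma parent_mem t j x : parent t j = Some x -> j \in labels t.
Proof.
elim: t x => [|l IHl v r IHr] x //=.
case: ifP => [/orP [/eqP /root_mem h | /eqP /root_mem h] _|_].
- by rewrite mem_cat h.
- by rewrite mem_cat inE h !orbT.
case E: (parent l j) => [y|] h.
  by rewrite mem_cat (IHl y E).
by rewrite mem_cat inE (IHr x h) !orbT.
Qed.

Lemma parent_child l v r j x : parent (BNode l v r) j = Some x ->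
  (j \in labels l) || (j \in labels r).
Proof.
rewrite /=; case: ifP => [/orP [/eqP /root_mem h | /eqP /root_mem h] _|_].
- by rewrite h.
- by rewrite h orbT.
case E: (parent l j) => [y|] h.
  by rewrite (parent_mem E).
by rewrite (parent_mem h) orbT.
Qed.

Lemma last_pre t k : search_tree t -> all (fun x => x <= k) (labels t) -> cL t k <> None ->
  last 0 (preorder t) != k.
Proof.
elim: t => [|l IHl v r IHr]; first by [].
move=> /= /and4P [h1 h2 h3 h4]; rewrite all_cat /= => /and3P [hl hv hr].
rewrite /cL /=; case: eqP => [ek|nek].
  subst v; case: l IHl h1 h3 hl => [|ll lv lr] //= _ h1 h3 hl _.
  case: r IHr h2 h4 hr => [|rl rv rr] /=; last first.
    move=> _ h2 _ hr; have := allP h2 rv; have := allP hr rv.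
    rewrite mem_cat inE eqxx orbT => /(_ isT) ? /(_ isT); lia.
  move=> _ _ _ _; rewrite cats0 /=.
  set s := preorder ll ++ preorder lr.
  have hin : last lv s \in lv :: s by exact: mem_last.
  have : last lv s \in labels (BNode ll lv lr).
    by rewrite -(perm_mem (perm_pre (BNode ll lv lr))).
  move/(allP h1) => h; apply/negP => /eqP e; lia.
case E: (subtree l k) => [|a b c]; last first.
  have := subtree_mem E => /(allP h1) ?; lia.
move=> hc; case: r IHr h2 h4 hr hc => [|rl rv rr] // IHr h2 h4 hr hc.
rewrite last_cat /= .
have := IHr h4 hr; rewrite /cL => /(_ hc) /=.
by [].
Qed.


Theorem lemma8 (k : nat) (P : btree) (e : nat -> bool) :
  in_T k P -> friendly k P e -> tame (sigma_minus k P e).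
Proof.
move=> /andP [hs hp] [[hpar hcl] hfr hek].
have [l [v [r eP]]] : exists l v r, P = BNode l v r.
  by case: P hpar {hs hp hcl hfr hek} => [|l v r] //= _; exists l, v, r.
set tau := preorder P.
have szt : size tau = k by rewrite (perm_size (perm_pre P)) (perm_size hp) size_iota.
have hkpos : 0 < k.
  by rewrite -(size_iota 1 k) -(perm_size hp) eP size_cat /= addnS.
have hall : all (fun x => x <= k) (labels P).
  by apply/allP => x; rewrite (perm_mem hp) mem_iota => /andP [_]; rewrite add1n ltnS.
have kin : k \in labels P by rewrite (perm_mem hp) mem_iota; apply/andP; split => //; rewrite add1n.
have ht : perm_eq tau (iota 1 (size tau)) by rewrite szt; exact: perm_trans (perm_pre P) hp.
have h0 : nth 0 tau 0 != size tau.
  rewrite szt /tau eP /=; apply/negP => /eqP ev.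
  case E: (parent P k) => [x|]; last by apply: hpar.
  move: E; rewrite eP => /parent_child; move: hs; rewrite eP /= => /and4P [h1 h2 _ _].
  case/orP => [/(allP h1)|/(allP h2)]; rewrite ev ltnn //.
have hl : nth 0 tau (size tau).-1 != size tau.
  by rewrite nth_last szt; apply: last_pre.
have -> : sigma_minus k P e = (tau, [seq x <- flatten [seq [seq (index j tau, m) | m <- BRm P j] ++
     (if (Some j != Defs.root P) && e j then
        [:: (index j tau, minl (labels (subtree P j)) - 1); (index j tau, maxl (labels (subtree P j)))]
      else [::]) | j <- iota 1 k] | x != (index k tau, k)]) by [].
apply: tame_gen => //; first by rewrite szt.
rewrite szt => ab; rewrite mem_filter => /andP [hne /flattenP [s /mapP [j hj ->] hab]].
move: hab; rewrite mem_cat => /orP [].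
  case/mapP => m hm -> /=.
  have [y hy hmy] := take_last_lt (sorted_rspine (search_sub j hs)) hm.
  have := allP hall y (labels_sub (mem_rspine hy)); lia.
case: ifP => [/andP [hroot hej]|] //.
rewrite !inE => /orP [/eqP -> | /eqP eab] /=.
  have := foldr_min (head 0 (labels (subtree P j))) (labels (subtree P j)).
  rewrite /minl.
  case E: (labels (subtree P j)) => [|a s'] /=; first lia.
  have : a <= k by apply: (allP hall); apply: (labels_sub (j := j)); rewrite E inE eqxx.
  lia.
rewrite eab /=; apply/negP => /eqP hm.
have kL := maxl_mem hkpos hm.
move: hne; rewrite eab hm => hne.
have hjk : j != k by apply/negP => /eqP ejk; move: hne; rewrite ejk eqxx.
have jr := in_rspine hs hall kL.
have hlast := last_rspine 0 hs hall kin.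
have hr' : Some j <> Some v by move: hroot; rewrite eP => /eqP.
have := hfr j; rewrite eP /= /BRm /BR /= eqxx -eP => /(_ (mem_take_last (d := 0) jr _)).
rewrite hlast => /(_ hjk) /(_ hr').
by rewrite hej.
Qed.
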